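(* Let $G=\langle S\mid R\rangle$ be a finite group presentation. If $G$ is $k$-chordal with respect to $S$ for some $k$, then $\langle S\mid R\rangle$ admits a recursive isoperimetric function; consequently, $\langle S\mid R\rangle$ has solvable word problem.
   Context: $S$ and $R\subseteq F(S)$ are finite, $F(S)$ the free group on $S$, and $S^{\pm1}=S\cup S^{-1}\setminus\{e\}$. For $\omega\in F(S)$ representing the identity of $G$, its area $A(\omega)$ is the least $m$ such that $\omega=\prod_{i=1}^m u_ir_i^{\varepsilon_i}u_i^{-1}$ in $F(S)$ with $u_i\in F(S)$, $r_i\in R$, $\varepsilon_i\in\{\pm1\}$. The Dehn function is $\mathrm{Dehn}(n)=\max\{A(\omega):\omega\in\langle\langle R\rangle\rangle,\ |\omega|\le n\}$, where $\langle\langle R\rangle\rangle$ is the normal closure of $R$ in $F(S)$ and $|\omega|$ the word length. An isoperimetric function is a non-decreasing $f:\mathbb{N}\to\mathbb{R}$ with $\mathrm{Dehn}\le f$. A relation $s_1\cdots s_n=e$ in $G$ with $n>2$, $s_i\in S^{\pm1}$, is simple if $s_p\cdots s_q=e$ holds exactly when $(p,q)=(1,n)$. $G$ is $k$-chordal with respect to $S$ if for every simple relation $s_1\cdots s_n=e$ with $n\ge k$ there exist $1\le i<j\le n$ and $s'_1,\dots,s'_r\in S^{\pm1}$ with $s_i\cdots s_j=s'_1\cdots s'_r$ and $r\le\min\{j-i,\,n-j+i-2\}$. *)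

(* Defs.v *)
From mathcomp Require Import all_boot.
Set Implicit Arguments. Unset Strict Implicit. Unset Printing Implicit Defensive.

(* A letter (s, b) denotes s if b = false and s^{-1} if b = true.       *)
Definition letter (S : finType) := (S * bool)%type.
Definition word (S : finType) := seq (letter S).

Definition inv_letter (S : finType) (x : letter S) : letter S := (x.1, ~~ x.2).
Definition inv_word (S : finType) (w : word S) : word S := rev (map (@inv_letter S) w).

Fixpoint reduce (S : finType) (w : word S) : word S :=
  match w with
  | [::] => [::]
  | x :: w' =>
      match reduce w' with
      | y :: r => if y == inv_letter x then r else x :: y :: r
      | [::] => [:: x]
      end
  end.

Definition free_eq (S : finType) (u v : word S) : Prop := reduce u = reduce v.

(* The product  prod_i u_i r_i^{eps_i} u_i^{-1}  for a list of triples
   (u_i, r_i, eps_i); eps = true means exponent -1. *)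
Definition conj_prod (S : finType) (fs : seq (word S * word S * bool)) : word S :=
  flatten [seq let: (u, r, e) := t in u ++ (if e then inv_word r else r) ++ inv_word u
          | t <- fs].

Definition area_le (S : finType) (R : seq (word S)) (w : word S) (m : nat) : Prop :=
  exists fs : seq (word S * word S * bool),
    [/\ size fs <= m, all (fun t => t.1.2 \in R) fs & free_eq w (conj_prod fs)].

(* w lies in the normal closure <<R>> of R in F(S), i.e. w = e in G = <S|R>. *)
Definition in_ncl (S : finType) (R : seq (word S)) (w : word S) : Prop :=
  exists m, area_le R w m.

Definition G_eq (S : finType) (R : seq (word S)) (u v : word S) : Prop :=
  in_ncl R (u ++ inv_word v).

Definition isoperimetric (S : finType) (R : seq (word S)) (f : nat -> nat) : Prop :=
  {homo f : m n / m <= n} /\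
  forall (n : nat) (w : word S), in_ncl R w -> size w <= n -> area_le R w (f n).

(* subword s p q = s_p ... s_q (1-indexed, 1 <= p <= q <= size s). *)
Definition subword (T : Type) (s : seq T) (p q : nat) : seq T :=
  take (q.+1 - p) (drop p.-1 s).

Definition simple_relation (S : finType) (R : seq (word S)) (s : word S) : Prop :=
  2 < size s /\
  forall p q, 1 <= p -> p <= q -> q <= size s ->
    (in_ncl R (subword s p q) <-> (p = 1 /\ q = size s)).

(* r <= min{j - i, n - j + i - 2} is written without truncated subtraction. *)
Definition k_chordal (S : finType) (R : seq (word S)) (k : nat) : Prop :=
  forall s : word S, simple_relation R s -> k <= size s ->
    exists i j (s' : word S),
      [/\ 1 <= i, i < j & j <= size s] /\
      [/\ size s' + i <= j, size s' + j + 2 <= size s + i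
        & G_eq R (subword s i j) s'].

Inductive code : Type :=
| cZero : code
| cSucc : code
| cProj : nat -> code
| cComp : code -> seq code -> code
| cPrimRec : code -> code -> code
| cMu : code -> code.

Inductive eval : code -> seq nat -> nat -> Prop :=
| evZero xs : eval cZero xs 0
| evSucc x xs : eval cSucc (x :: xs) x.+1
| evProj i xs : i < size xs -> eval (cProj i) xs (nth 0 xs i)
| evComp f gs xs ys y : evals gs xs ys -> eval f ys y -> eval (cComp f gs) xs y
| evRec0 g h xs y : eval g xs y -> eval (cPrimRec g h) (0 :: xs) y
| evRecS g h n xs y z : eval (cPrimRec g h) (n :: xs) y ->
    eval h (n :: y :: xs) z -> eval (cPrimRec g h) (n.+1 :: xs) z
| evMu f xs n : eval f (n :: xs) 0 ->
    (forall m, m < n -> exists v, 0 < v /\ eval f (m :: xs) v) ->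
    eval (cMu f) xs n
with evals : seq code -> seq nat -> seq nat -> Prop :=
| evsNil xs : evals [::] xs [::]
| evsCons g gs xs y ys : eval g xs y -> evals gs xs ys -> evals (g :: gs) xs (y :: ys).

Definition recursive_fun (f : nat -> nat) : Prop :=
  exists c : code, forall n, eval c [:: n] (f n).

(* Goedel numbering of words: letter (s,b) |-> 2*rank(s) + b,
   [::] |-> 0,  a :: w |-> 2^a * (2 * code(w) + 1)  (a bijection seq nat ~ nat). *)
Definition enc_letter (S : finType) (x : letter S) : nat :=
  (enum_rank x.1).*2 + x.2.
Fixpoint enc_word (S : finType) (w : word S) : nat :=
  match w with
  | [::] => 0
  | x :: w' => 2 ^ enc_letter x * (enc_word w').*2.+1
  end.

Definition word_problem_solvable (S : finType) (R : seq (word S)) : Prop :=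
  exists c : code, forall w : word S,
    (in_ncl R w -> eval c [:: enc_word w] 1) /\
    (~ in_ncl R w -> eval c [:: enc_word w] 0).

(* Main.v *)
Require Import Defs.
From mathcomp Require Import all_boot zify.
From Stdlib Require Import Classical.
Set Implicit Arguments. Unset Strict Implicit. Unset Printing Implicit Defensive.

Section FreeGroup.
Variable S : finType.
Implicit Types (x y : letter S) (u v w a b c z s : word S).

Lemma inv_letterK : involutive (@inv_letter S).
Proof. by case=> s e; rewrite /inv_letter /= negbK. Qed.

Lemma inv_word_cons x w : inv_word (x :: w) = inv_word w ++ [:: inv_letter x].
Proof. by rewrite /inv_word /= rev_cons cats1. Qed.

Lemma inv_word_cat u v : inv_word (u ++ v) = inv_word v ++ inv_word u.
Proof. by rewrite /inv_word map_cat rev_cat. Qed.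

Lemma inv_wordK : involutive (@inv_word S).
Proof.
move=> w; elim: w => [|x w IH] //.
by rewrite inv_word_cons inv_word_cat IH /inv_word /= inv_letterK.
Qed.

Lemma size_inv_word w : size (inv_word w) = size w.
Proof. by rewrite /inv_word size_rev size_map. Qed.

Definition cr x (r : word S) : word S :=
  match r with
  | y :: r' => if y == inv_letter x then r' else x :: y :: r'
  | [::] => [:: x]
  end.

Lemma reduce_cons x w : reduce (x :: w) = cr x (reduce w).
Proof. by []. Qed.

Fixpoint reduced (w : word S) : bool :=
  match w with
  | x :: ((y :: _) as w') => (y != inv_letter x) && reduced w'
  | _ => true
  end.

Lemma reduced_tail x w : reduced (x :: w) -> reduced w.
Proof. by case: w => //= y w /andP[]. Qed.

Lemma cr_reduced x t : reduced t -> reduced (cr x t).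
Proof.
case: t => [//|y t] /= H; case: ifP => [_|/negbT ne].
  exact: reduced_tail H.
by rewrite /= ne H.
Qed.

Lemma reduce_reduced w : reduced (reduce w).
Proof. elim: w => [//|x w IH]; rewrite reduce_cons; exact: cr_reduced. Qed.

Lemma reduce_id w : reduced w -> reduce w = w.
Proof.
elim: w => [//|x w IH] H; rewrite reduce_cons IH ?(reduced_tail H) //.
case: w H {IH} => [//|y w] /= /andP[ne _].
by rewrite (negbTE ne).
Qed.

Lemma reduceK w : reduce (reduce w) = reduce w.
Proof. exact/reduce_id/reduce_reduced. Qed.

Lemma cr_cancel x t : reduced t -> cr x (cr (inv_letter x) t) = t.
Proof.
case: t => [|y t] H /=; first by rewrite eqxx.
case: eqP => [e|ne].
  rewrite inv_letterK in e; subst y.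
  case: t H => [//|z t] /= /andP[ne _].
  by rewrite (negbTE ne).
by rewrite /= eqxx.
Qed.

Lemma reduce_cat a b : reduce (a ++ b) = foldr cr (reduce b) a.
Proof. by elim: a => //= x a ->. Qed.

Lemma foldr_cr_reduced t s : reduced t -> reduced (foldr cr t s).
Proof. by move=> H; elim: s => //= x s IH; exact: cr_reduced. Qed.

Lemma cr_foldr x s t : reduced s -> reduced t ->
  cr x (foldr cr t s) = foldr cr t (cr x s).
Proof.
case: s => [//|y s] Hs Ht /=.
case: eqP => [->|_] //.
by rewrite cr_cancel // foldr_cr_reduced.
Qed.

Lemma foldr_reduce a t : reduced t -> foldr cr t a = foldr cr t (reduce a).
Proof.
move=> Ht; elim: a => [//|x a IH] /=.
by rewrite IH cr_foldr // reduce_reduced.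
Qed.

Lemma reduce_catl a b : reduce (a ++ b) = reduce (reduce a ++ b).
Proof. by rewrite !reduce_cat -foldr_reduce // reduce_reduced. Qed.

Lemma reduce_catr a b : reduce (a ++ b) = reduce (a ++ reduce b).
Proof. by rewrite !reduce_cat reduceK. Qed.

Lemma red_congr u u' v v' : reduce u = reduce u' -> reduce v = reduce v' ->
  reduce (u ++ v) = reduce (u' ++ v').
Proof.
move=> Hu Hv.
by rewrite reduce_catl Hu -reduce_catl reduce_catr Hv -reduce_catr.
Qed.

Lemma red_cancel b c : reduce (b ++ inv_word b ++ c) = reduce c.
Proof.
elim: b c => [|x b IH] c //.
have -> : (x :: b) ++ inv_word (x :: b) ++ c =
  x :: (b ++ inv_word b ++ (inv_letter x :: c)) by rewrite inv_word_cons -catA.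
by rewrite reduce_cons IH reduce_cons cr_cancel // reduce_reduced.
Qed.

Lemma red_cancel' b c : reduce (inv_word b ++ b ++ c) = reduce c.
Proof. by have := red_cancel (inv_word b) c; rewrite inv_wordK. Qed.

Lemma red_mid a b c : reduce (a ++ b ++ inv_word b ++ c) = reduce (a ++ c).
Proof. by rewrite reduce_catr red_cancel -reduce_catr. Qed.

Lemma red_mid' a b c : reduce (a ++ inv_word b ++ b ++ c) = reduce (a ++ c).
Proof. by rewrite reduce_catr red_cancel' -reduce_catr. Qed.

Lemma red_inv u u' : reduce u = reduce u' -> reduce (inv_word u) = reduce (inv_word u').
Proof.
move=> H.
transitivity (reduce (inv_word u ++ u' ++ inv_word u' ++ [::])).
  by rewrite red_mid !cats0.
transitivity (reduce (inv_word u ++ u ++ inv_word u' ++ [::])).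
  by apply: red_congr => //; apply: red_congr.
by rewrite red_cancel' cats0.
Qed.

Variable R : seq (word S).

Definition term (t : word S * word S * bool) : word S :=
  let: (u, r, e) := t in u ++ (if e then inv_word r else r) ++ inv_word u.

Lemma conj_prodE fs : conj_prod fs = flatten (map term fs).
Proof. by []. Qed.

Lemma area_free w w' m : reduce w = reduce w' -> area_le R w m -> area_le R w' m.
Proof.
move=> e [fs [h1 h2 h3]]; exists fs; split => //.
by rewrite /free_eq -e.
Qed.

Lemma area_mono w m m' : m <= m' -> area_le R w m -> area_le R w m'.
Proof. move=> le [fs [h1 h2 h3]]; exists fs; split => //; exact: leq_trans le. Qed.

Lemma area_nil : area_le R [::] 0.
Proof. by exists [::]. Qed.

Lemma area_cat u v p1 p2 : area_le R u p1 -> area_le R v p2 -> area_le R (u ++ v) (p1 + p2).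
Proof.
move=> [fs [h1 h2 h3]] [gs [g1 g2 g3]]; exists (fs ++ gs); split.
- by rewrite size_cat leq_add.
- by rewrite all_cat h2 g2.
- by rewrite /free_eq conj_prodE map_cat flatten_cat -!conj_prodE; apply: red_congr.
Qed.

Lemma conj_prod_cons t fs : conj_prod (t :: fs) = term t ++ conj_prod fs.
Proof. by []. Qed.

Lemma conj_cp a fs :
  reduce (a ++ conj_prod fs ++ inv_word a) =
  reduce (conj_prod (map (fun t => (a ++ t.1.1, t.1.2, t.2)) fs)).
Proof.
elim: fs => [|t fs IH].
  by rewrite /= -(cats0 (a ++ _)) -catA red_cancel.
rewrite map_cons !conj_prod_cons.
transitivity (reduce ((a ++ term t ++ inv_word a) ++ (a ++ conj_prod fs ++ inv_word a))).
  have := red_mid' (a ++ term t) a (conj_prod fs ++ inv_word a).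
  rewrite -!catA => ->; by rewrite -?catA.
apply: red_congr => //.
by case: t => [[v r] e]; rewrite /term /= inv_word_cat -!catA.
Qed.

Lemma area_conj a u m : area_le R u m -> area_le R (a ++ u ++ inv_word a) m.
Proof.
move=> [fs [h1 h2 h3]].
exists (map (fun t => (a ++ t.1.1, t.1.2, t.2)) fs); split.
- by rewrite size_map.
- by rewrite all_map.
- rewrite /free_eq -conj_cp; apply: red_congr => //; apply: red_congr => //.
Qed.

Lemma inv_word_flatten (ss : seq (word S)) :
  inv_word (flatten ss) = flatten (rev (map (@inv_word S) ss)).
Proof.
elim: ss => [//|s ss IH] /=.
by rewrite inv_word_cat IH rev_cons flatten_rcons.
Qed.

Lemma area_inv u m : area_le R u m -> area_le R (inv_word u) m.
Proof.
move=> [fs [h1 h2 h3]].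
exists (rev (map (fun t => (t.1.1, t.1.2, ~~ t.2)) fs)); split.
- by rewrite size_rev size_map.
- by rewrite all_rev all_map.
- rewrite /free_eq (red_inv h3) conj_prodE inv_word_flatten -map_rev -map_rev -map_comp.
  rewrite conj_prodE -map_rev -map_comp.
  congr (reduce (flatten _)); apply: eq_map => -[[v r] e] /=.
  rewrite /term /= !inv_word_cat inv_wordK -catA; case: e => //=; by rewrite inv_wordK.
Qed.

Lemma area_replace a u z s p1 p2 :
  area_le R (u ++ inv_word s) p1 -> area_le R (a ++ s ++ z) p2 ->
  area_le R (a ++ u ++ z) (p1 + p2).
Proof.
move=> H1 H2; have := area_cat (area_conj a H1) H2; apply: area_free.
have := red_mid' (a ++ u ++ inv_word s) a (s ++ z); rewrite -!catA => ->.
by have := red_mid' (a ++ u) s z; rewrite -!catA.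
Qed.

Lemma ncl_replace a u z s :
  in_ncl R (u ++ inv_word s) -> in_ncl R (a ++ s ++ z) -> in_ncl R (a ++ u ++ z).
Proof. move=> [p1 H1] [p2 H2]; exists (p1 + p2); exact: (area_replace H1 H2). Qed.

Lemma ncl_replace_rev a u z s :
  in_ncl R (a ++ u ++ z) -> in_ncl R (u ++ inv_word s) -> in_ncl R (a ++ s ++ z).
Proof.
move=> [p1 H1] [p2 H2]; exists (p2 + p1).
have := area_cat (area_conj a (area_inv H2)) H1; apply: area_free.
rewrite inv_word_cat inv_wordK.
have := red_mid' (a ++ s ++ inv_word u) a (u ++ z); rewrite -!catA => ->.
by have := red_mid' (a ++ s) u z; rewrite -!catA.
Qed.

End FreeGroup.

Section Decomp.
Variable S : finType.
Variable R : seq (word S).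
Implicit Types (u v w s : word S).

Definition repw w i j s := take i.-1 w ++ s ++ drop j w.
Definition loopw w i j s := subword w i j ++ inv_word s.
Definition gsplit w i j s : bool :=
  [&& 1 <= i, i <= j, j <= size w &
   ((((i != 1) || (j != size w)) && (s == [::])) ||
    [&& i < j, size s + i <= j & size s + j + 2 <= size w + i])].

Lemma split_word w i j : 1 <= i -> i <= j -> j <= size w ->
  w = take i.-1 w ++ subword w i j ++ drop j w.
Proof.
move=> h1 h2 h3; rewrite /subword.
have -> : drop j w = drop (j.+1 - i) (drop i.-1 w).
  by rewrite drop_drop; congr drop; lia.
by rewrite !cat_take_drop.
Qed.

Lemma size_subword w i j : 1 <= i -> i <= j -> j <= size w ->
  size (subword w i j) = j.+1 - i.
Proof. move=> h1 h2 h3; rewrite /subword size_take_min size_drop; lia. Qed.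

Lemma size_repw w i j s : 1 <= i -> i <= j -> j <= size w ->
  size (repw w i j s) = i.-1 + size s + (size w - j).
Proof. move=> h1 h2 h3; rewrite /repw !size_cat size_take_min size_drop; lia. Qed.

Lemma gsplit_lt w i j s : gsplit w i j s ->
  size (loopw w i j s) < size w /\ size (repw w i j s) < size w.
Proof.
case/and4P=> h1 h2 h3 h4.
rewrite /loopw size_cat size_inv_word size_subword // size_repw //.
case/orP: h4 => [/andP[h4 /eqP->]|/and3P[h4 h5 h6]] /=; lia.
Qed.

Lemma gsplit_sound w i j s : gsplit w i j s ->
  in_ncl R (loopw w i j s) -> in_ncl R (repw w i j s) -> in_ncl R w.
Proof.
case/and4P=> h1 h2 h3 _ H1 H2.
rewrite (split_word h1 h2 h3); exact: ncl_replace H1 H2.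
Qed.

Lemma subword_full w : subword w 1 (size w) = w.
Proof. by rewrite /subword subn1 /= drop0 take_size. Qed.

Lemma decomp k w : k_chordal R k -> in_ncl R w -> maxn k 3 <= size w ->
  exists i j s, [/\ gsplit w i j s, in_ncl R (loopw w i j s) & in_ncl R (repw w i j s)].
Proof.
move=> Hk Hw Hs.
have Hrep : forall i j s, 1 <= i -> i <= j -> j <= size w ->
    in_ncl R (loopw w i j s) -> in_ncl R (repw w i j s).
  move=> i j s h1 h2 h3 Hl; rewrite /repw.
  apply: (@ncl_replace_rev _ _ _ (subword w i j)) => //.
  by rewrite -split_word.
case: (classic (simple_relation R w)) => [sw|nsw].
  have [i [j [s [[h1 h2 h3] [h4 h5 h6]]]]] := Hk w sw (leq_trans (leq_maxl _ _) Hs).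
  exists i, j, s; split => //; last by apply: Hrep => //; exact: ltnW.
  by rewrite /gsplit h1 (ltnW h2) h3 h2 h4 h5 orbT.
have [p [q [h1 h2 h3 h4]]] : exists p q, [/\ 1 <= p, p <= q, q <= size w &
    ~ (in_ncl R (subword w p q) <-> p = 1 /\ q = size w)].
  apply: NNPP => H; apply: nsw; split; first by move: Hs; rewrite geq_max => /andP[_]; lia.
  move=> p q h1 h2 h3; apply: NNPP => H'; apply: H; exists p, q; split => //.
have ne : ~ (p = 1 /\ q = size w).
  case=> ep eq; apply: h4; split => // _; by rewrite ep eq subword_full.
have Hl : in_ncl R (subword w p q).
  apply: NNPP => H; apply: h4; split => // -[]; exact: H.
have Hl' : in_ncl R (loopw w p q [::]) by rewrite /loopw cats0.
exists p, q, [::]; split => //; last exact: Hrep.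
rewrite /gsplit h1 h2 h3 /= eqxx andbT.
apply/orP; left; rewrite -negb_and; apply/negP => /andP[/eqP a /eqP b]; exact: ne.
Qed.

Fixpoint allw (n : nat) : seq (word S) :=
  if n is n'.+1 then [::] :: [seq x :: w | x <- (enum {: S * bool} : seq (letter S)), w <- allw n']
  else [:: [::]].

Lemma allwP n w : size w <= n -> w \in allw n.
Proof.
elim: n w => [|n IH] [|x w] //= H.
rewrite in_cons; apply/orP; right.
apply/allpairsP; exists (x, w); split => //=; [exact: mem_enum | exact: IH].
Qed.

Lemma finite_area (l : seq (word S)) :
  exists C, forall w, w \in l -> in_ncl R w -> area_le R w C.
Proof.
elim: l => [|w0 l [C IH]]; first by exists 0.
case: (classic (in_ncl R w0)) => [[m Hm]|nH].
  exists (maxn C m) => w; rewrite in_cons => /orP[/eqP->|Hw] Hn.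
    exact: area_mono (leq_maxr _ _) Hm.
  exact: area_mono (leq_maxl _ _) (IH w Hw Hn).
exists C => w; rewrite in_cons => /orP[/eqP->|Hw] Hn //; exact: IH.
Qed.

Lemma dehn k : k_chordal R k -> exists C, forall n w,
  in_ncl R w -> size w <= n -> area_le R w (C * 2 ^ n).
Proof.
move=> Hk; set K := maxn k 3.
have [C0 HC] := finite_area (allw K).
exists C0.+1.
have base : forall n w, in_ncl R w -> size w < K -> area_le R w (C0.+1 * 2 ^ n).
  move=> n w Hw Hs; apply: area_mono (HC w (allwP (ltnW Hs)) Hw).
  rewrite mulSn; have := expn_gt0 2 n; nia.
elim=> [|n IH] w Hw Hs.
  apply: base => //; apply: leq_ltn_trans Hs _; rewrite /K; lia.
case: (ltnP (size w) K) => HK; first exact: base.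
have [i [j [s [Hg Hl Hr]]]] := decomp Hk Hw HK.
have [l1 l2] := gsplit_lt Hg.
case/and4P: Hg => h1 h2 h3 _.
rewrite (split_word h1 h2 h3).
have -> : C0.+1 * 2 ^ n.+1 = C0.+1 * 2 ^ n + C0.+1 * 2 ^ n by rewrite expnS; lia.
apply: area_replace; [apply: IH Hl _|apply: IH Hr _]; lia.
Qed.

End Decomp.

Inductive ex : Type :=
| V of nat | Z | Sc of ex | Rc of ex & ex & ex | Cl of ex & ex & ex & ex.

Fixpoint iterR (g : nat) (h : nat -> nat -> nat) (k : nat) : nat :=
  if k is k'.+1 then h k' (iterR g h k') else g.

Fixpoint den (e : ex) (env : seq nat) : nat :=
  match e with
  | V i => nth 0 env i
  | Z => 0
  | Sc e => (den e env).+1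
  | Rc n g h => iterR (den g env) (fun k a => den h [:: k, a & env]) (den n env)
  | Cl f a b c => den f [:: den a env; den b env; den c env]
  end.

Fixpoint comp (m : nat) (e : ex) : code :=
  match e with
  | V i => if i < m then cProj i else cZero
  | Z => cZero
  | Sc e => cComp cSucc [:: comp m e]
  | Rc n g h => cComp (cPrimRec (comp m g) (comp m.+2 h)) (comp m n :: map cProj (iota 0 m))
  | Cl f a b c => cComp (comp 3 f) [:: comp m a; comp m b; comp m c]
  end.

Lemma evals_proj env k s : s + k = size env ->
  evals (map cProj (iota s k)) env (drop s env).
Proof.
elim: k s => [|k IH] s H.
  rewrite addn0 in H; rewrite H drop_size; exact: evsNil.
rewrite /= (drop_nth 0); last by lia.
apply: evsCons; first by apply: evProj; lia.
apply: IH; lia.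
Qed.

Lemma comp_ok e : forall env, eval (comp (size env) e) env (den e env).
Proof.
elim: e => [i|| e IH|n IHn g IHg h IHh|f IHf a IHa b IHb c IHc] env /=.
- case: ltnP => H; first exact: evProj.
  rewrite nth_default //; exact: evZero.
- exact: evZero.
- apply: (evComp (ys := [:: den e env])); first by apply: evsCons => //; exact: evsNil.
  exact: evSucc.
- apply: (evComp (ys := den n env :: env)).
    apply: evsCons => //; have := @evals_proj env (size env) 0; rewrite drop0; apply; lia.
  elim: (den n env) => [|k IHk] /=; first exact: evRec0.
  apply: evRecS IHk _; exact: (IHh [:: k, _ & env]).
- apply: (evComp (ys := [:: den a env; den b env; den c env])); last exact: (IHf [:: den a env; den b env; den c env]).
  by do 3 apply: evsCons => //; exact: evsNil.
Qed.

Lemma comp_ok1 e n : eval (comp 1 e) [:: n] (den e [:: n]).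
Proof. exact: (comp_ok e [:: n]). Qed.

Fixpoint sh (c d : nat) (e : ex) : ex :=
  match e with
  | V i => if i < c then V i else V (i + d)
  | Z => Z
  | Sc e => Sc (sh c d e)
  | Rc n g h => Rc (sh c d n) (sh c d g) (sh c.+2 d h)
  | Cl f a b c' => Cl f (sh c d a) (sh c d b) (sh c d c')
  end.

Lemma iterR_ext g h1 h2 k : (forall i a, h1 i a = h2 i a) -> iterR g h1 k = iterR g h2 k.
Proof. by move=> H; elim: k => //= k ->. Qed.

Lemma den_sh e : forall c d env ext, c <= size env -> size ext = d ->
  den (sh c d e) (take c env ++ ext ++ drop c env) = den e env.
Proof.
elim: e => [i|| e IH|n IHn g IHg h IHh|f IHf a IHa b IHb c IHc] c0 d env ext Hc Hd /=.
- case: ltnP => H /=.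
    by rewrite nth_cat size_takel // H nth_take.
  rewrite nth_cat size_takel // ltnNge (leq_trans H (leq_addr _ _)) /=.
  rewrite nth_cat Hd ltnNge; have -> /= : d <= i + d - c0 by lia.
  by rewrite nth_drop; congr nth; lia.
- by [].
- by rewrite IH.
- rewrite IHn // IHg //; apply: iterR_ext => k a0.
  exact: (IHh c0.+2 d [:: k, a0 & env] ext).
- by rewrite IHa // IHb // IHc.
Qed.

Lemma den_sh0 e d env ext : size ext = d -> den (sh 0 d e) (ext ++ env) = den e env.
Proof. by move=> H; have := @den_sh e 0 d env ext (leq0n _) H; rewrite take0 drop0. Qed.

Lemma den_sh1 e d a env ext : size ext = d ->
  den (sh 1 d e) (a :: ext ++ env) = den e (a :: env).
Proof. by move=> H; have := @den_sh e 1 d (a :: env) ext (ltn0Sn _) H; rewrite /= take0 drop0. Qed.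

Lemma den_Cl f a b c env : den (Cl f a b c) env = den f [:: den a env; den b env; den c env].
Proof. by []. Qed.
Lemma den_Rc n g h env : den (Rc n g h) env = iterR (den g env) (fun k a => den h [:: k, a & env]) (den n env).
Proof. by []. Qed.
Lemma den_Sc e env : den (Sc e) env = (den e env).+1. Proof. by []. Qed.
Lemma den_Z env : den Z env = 0. Proof. by []. Qed.
Lemma den_V0 x0 env : den (V 0) (x0 :: env) = x0. Proof. by []. Qed.
Lemma den_V1 x0 x1 env : den (V 1) [:: x0, x1 & env] = x1. Proof. by []. Qed.
Lemma den_V2 x0 x1 x2 env : den (V 2) [:: x0, x1, x2 & env] = x2. Proof. by []. Qed.
Lemma den_V3 x0 x1 x2 x3 env : den (V 3) [:: x0, x1, x2, x3 & env] = x3. Proof. by []. Qed.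
Lemma den_V4 x0 x1 x2 x3 x4 env : den (V 4) [:: x0, x1, x2, x3, x4 & env] = x4. Proof. by []. Qed.
Lemma den_V5 x0 x1 x2 x3 x4 x5 env : den (V 5) [:: x0, x1, x2, x3, x4, x5 & env] = x5. Proof. by []. Qed.
Lemma den_V6 x0 x1 x2 x3 x4 x5 x6 env : den (V 6) [:: x0, x1, x2, x3, x4, x5, x6 & env] = x6. Proof. by []. Qed.
Lemma den_V7 x0 x1 x2 x3 x4 x5 x6 x7 env : den (V 7) [:: x0, x1, x2, x3, x4, x5, x6, x7 & env] = x7. Proof. by []. Qed.
Lemma den_V8 x0 x1 x2 x3 x4 x5 x6 x7 x8 env : den (V 8) [:: x0, x1, x2, x3, x4, x5, x6, x7, x8 & env] = x8. Proof. by []. Qed.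
Definition denV := (den_V0, den_V1, den_V2, den_V3, den_V4, den_V5, den_V6, den_V7, den_V8).
Lemma iterRS g h k : iterR g h k.+1 = h k (iterR g h k). Proof. by []. Qed.
Lemma iterR0 g h : iterR g h 0 = g. Proof. by []. Qed.

Lemma den_sh0_1 e k env : den (sh 0 1 e) (k :: env) = den e env.
Proof. exact: (@den_sh0 e 1 env [:: k]). Qed.
Lemma den_sh0_2 e k a env : den (sh 0 2 e) [:: k, a & env] = den e env.
Proof. exact: (@den_sh0 e 2 env [:: k; a]). Qed.
Lemma den_sh1_1 e p a env : den (sh 1 1 e) [:: p, a & env] = den e (p :: env).
Proof. exact: (@den_sh1 e 1 p env [:: a]). Qed.
Lemma den_sh1_2 e p m a env : den (sh 1 2 e) [:: p, m, a & env] = den e (p :: env).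
Proof. exact: (@den_sh1 e 2 p env [:: m; a]). Qed.

Definition Cst n := iter n Sc Z.
Lemma den_Cst n env : den (Cst n) env = n.
Proof. by elim: n => //= n ->. Qed.
Opaque Cst.

Definition Add a b := Rc a b (Sc (V 1)).
Lemma den_Add a b env : den (Add a b) env = den a env + den b env.
Proof. by rewrite /Add /=; elim: (den a env) => //= k ->. Qed.
Opaque Add.

Definition Pred a := Rc a Z (V 0).
Lemma den_Pred a env : den (Pred a) env = (den a env).-1.
Proof. by rewrite /Pred /=; case: (den a env). Qed.
Opaque Pred.

Definition Sub a b := Rc b a (Pred (V 1)).
Lemma den_Sub a b env : den (Sub a b) env = den a env - den b env.
Proof. by rewrite /Sub /=; elim: (den b env) => [|k IH] /=; rewrite ?subn0 // den_Pred /= IH subnS. Qed.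
Opaque Sub.

Definition Mul a b := Rc a Z (Add (V 1) (sh 0 2 b)).
Lemma den_Mul a b env : den (Mul a b) env = den a env * den b env.
Proof.
rewrite /Mul /=; elim: (den a env) => [|k IH] //=.
by rewrite den_Add /= den_sh0_2 IH mulSn addnC.
Qed.
Opaque Mul.

Definition Pow a b := Rc b (Cst 1) (Mul (V 1) (sh 0 2 a)).
Lemma den_Pow a b env : den (Pow a b) env = den a env ^ den b env.
Proof.
rewrite /Pow /=; elim: (den b env) => [|k IH] /=; first by rewrite den_Cst.
by rewrite den_Mul /= den_sh0_2 IH expnS mulnC.
Qed.
Opaque Pow.

Definition Sum n f := Rc n Z (Add (V 1) (sh 1 1 f)).
Lemma den_Sum n f env :
  den (Sum n f) env = \sum_(0 <= i < den n env) den f (i :: env).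
Proof.
rewrite /Sum /=; elim: (den n env) => [|k IH] /=; first by rewrite big_geq.
by rewrite den_Add /= den_sh1_1 IH big_nat_recr.
Qed.
Opaque Sum.

Definition Not a := Cl (Sub (Cst 1) (V 0)) a Z Z.
Lemma den_Not a env : den (Not a) env = (den a env == 0).
Proof. by rewrite /Not den_Cl den_Sub den_Cst den_V0; case: (den a env) => [|[]]. Qed.
Opaque Not.

Definition Pos a := Cl (Not (Not (V 0))) a Z Z.
Lemma den_Pos a env : den (Pos a) env = (den a env != 0).
Proof. by rewrite /Pos den_Cl !den_Not den_V0; case: (den a env). Qed.
Opaque Pos.

Lemma nb_neq0 (b : bool) : (nat_of_bool b != 0) = b.
Proof. by case: b. Qed.

Definition Le a b := Cl (Not (Sub (V 0) (V 1))) a b Z.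
Lemma den_Le a b env : den (Le a b) env = (den a env <= den b env).
Proof. by rewrite /Le den_Cl den_Not den_Sub den_V0 den_V1 subn_eq0. Qed.
Opaque Le.

Definition Lt a b := Cl (Le (Sc (V 0)) (V 1)) a b Z.
Lemma den_Lt a b env : den (Lt a b) env = (den a env < den b env).
Proof. by rewrite /Lt den_Cl den_Le den_Sc den_V0 den_V1. Qed.
Opaque Lt.

Definition And a b := Cl (Mul (Pos (V 0)) (Pos (V 1))) a b Z.
Lemma den_And a b env : den (And a b) env = (den a env != 0) && (den b env != 0).
Proof. by rewrite /And den_Cl den_Mul !den_Pos den_V0 den_V1; case: (_ != 0); case: (_ != 0). Qed.
Opaque And.

Definition Or a b := Cl (Pos (Add (V 0) (V 1))) a b Z.
Lemma den_Or a b env : den (Or a b) env = (den a env != 0) || (den b env != 0).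
Proof. by rewrite /Or den_Cl den_Pos den_Add den_V0 den_V1 addn_eq0 negb_and. Qed.
Opaque Or.

Definition Eq a b := Cl (And (Le (V 0) (V 1)) (Le (V 1) (V 0))) a b Z.
Lemma den_Eq a b env : den (Eq a b) env = (den a env == den b env).
Proof. by rewrite /Eq den_Cl den_And !den_Le den_V0 den_V1 !nb_neq0 eqn_leq. Qed.
Opaque Eq.

Definition Ite c a b := Cl (Add (Mul (Pos (V 0)) (V 1)) (Mul (Not (V 0)) (V 2))) c a b.
Lemma den_Ite c a b env :
  den (Ite c a b) env = if den c env != 0 then den a env else den b env.
Proof.
rewrite /Ite den_Cl den_Add !den_Mul den_Pos den_Not den_V0 den_V1 den_V2.
by case: (den c env) => [|k] /=; rewrite ?mul1n ?mul0n ?addn0.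
Qed.
Opaque Ite.

Lemma sum_has (N : nat) (F : nat -> nat) :
  (\sum_(0 <= i < N) F i != 0) = has (fun i => F i != 0) (iota 0 N).
Proof.
rewrite /index_iota subn0; elim: (iota 0 N) => [|x s IH]; rewrite ?big_nil ?big_cons //=.
by rewrite addn_eq0 negb_and IH.
Qed.

Definition Ex n f := Cl (Pos (V 0)) (Sum n f) Z Z.
Lemma den_Ex n f env :
  den (Ex n f) env = has (fun i => den f (i :: env) != 0) (iota 0 (den n env)).
Proof. by rewrite /Ex den_Cl den_Pos den_V0 den_Sum sum_has. Qed.
Opaque Ex.

Definition All n f := Cl (Not (V 0)) (Sum n (Not f)) Z Z.
Lemma den_All n f env :
  den (All n f) env = all (fun i => den f (i :: env) != 0) (iota 0 (den n env)).
Proof.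
rewrite /All den_Cl den_Not den_V0 den_Sum -[_ == 0]negbK sum_has -all_predC; congr nat_of_bool.
by apply: eq_all => i /=; rewrite den_Not; case: (den f _).
Qed.
Opaque All.

Definition Let_ a b := Rc (Sc Z) a (sh 0 1 b).
Lemma den_Let a b env : den (Let_ a b) env = den b (den a env :: env).
Proof. by rewrite /Let_ /= den_sh0_1. Qed.
Opaque Let_.

Lemma sum_lt N a : \sum_(0 <= i < N) (i < a) = minn N a.
Proof.
elim: N => [|N IH]; first by rewrite big_geq // min0n.
rewrite big_nat_recr //= IH; case: (ltnP N a) => H; lia.
Qed.

Definition DivF := Sum (V 0) (Le (Mul (Sc (V 0)) (V 2)) (V 1)).
Definition Div a d := Cl DivF a d Z.
Lemma den_Div a d env : 0 < den d env -> den (Div a d) env = den a env %/ den d env.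
Proof.
move=> Hd; rewrite /Div /DivF /= den_Sum /=.
under eq_bigr => i _ do rewrite den_Le den_Mul /= -(leq_divRL _ _ Hd).
rewrite sum_lt; apply/minn_idPr; exact: leq_div.
Qed.
Opaque Div.

Definition ModF := Sub (V 0) (Mul (V 1) (Div (V 0) (V 1))).
Definition Mod a d := Cl ModF a d Z.
Lemma den_Mod a d env : 0 < den d env -> den (Mod a d) env = den a env %% den d env.
Proof.
move=> Hd; rewrite /Mod /ModF /= den_Sub den_Mul den_Div //=.
rewrite {1}(divn_eq (den a env) (den d env)); lia.
Qed.
Opaque Mod.

Fixpoint encs (l : seq nat) : nat :=
  if l is a :: l' then 2 ^ a * (encs l').*2.+1 else 0.

Lemma encs_eq0 l : (encs l == 0) = (l == [::]).
Proof. by case: l => //= a l; rewrite muln_eq0 expn_eq0. Qed.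

Lemma size_le_encs l : size l <= encs l.
Proof.
elim: l => //= a l IH; have := expn_gt0 2 a; rewrite -mul2n; nia.
Qed.

Lemma dvd_pow2_odd a b o : odd o -> (2 ^ b.+1 %| 2 ^ a * o) = (b < a).
Proof.
move=> Ho; case: (ltnP b a) => H.
  by apply: dvdn_mulr; rewrite dvdn_Pexp2l.
apply/negP => Hd; have : 2 ^ a.+1 %| 2 ^ a * o.
  apply: dvdn_trans Hd; rewrite dvdn_Pexp2l //.
rewrite expnS mulnC dvdn_pmul2l ?expn_gt0 //.
by rewrite dvdn2 Ho.
Qed.

Definition V2F := Sum (V 0) (Not (Mod (V 1) (Pow (Cst 2) (Sc (V 0))))).
Definition Hd x := Cl V2F x Z Z.
Lemma den_Hd x env l : den x env = encs l -> den (Hd x) env = head 0 l.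
Proof.
move=> Hx; rewrite /Hd /V2F den_Cl den_Sum den_V0 Hx.
case: l Hx => [|a l] Hx; first by rewrite big_geq.
have E : forall i, (den (Mod (V 1) (Pow (Cst 2) (Sc (V 0))))
        [:: i; encs (a :: l); den Z env; den Z env] == 0) = (i < a).
  move=> i; rewrite den_Mod den_Pow den_Cst den_Sc !denV ?expn_gt0 //.
  by rewrite -/(dvdn _ _) dvd_pow2_odd //= odd_double.
under eq_bigr => i _ do rewrite den_Not E.

rewrite sum_lt; apply/minn_idPr.
apply: leq_trans (ltnW (ltn_expl a (ltnSn 1))) _.
by rewrite /= -{1}(muln1 (2 ^ a)) leq_mul2l ltn0Sn orbT.
Qed.
Opaque Hd.

Definition TlF := Div (Pred (Div (V 0) (Pow (Cst 2) (Hd (V 0))))) (Cst 2).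
Definition Tl x := Cl TlF x Z Z.
Lemma den_Tl x env l : den x env = encs l -> den (Tl x) env = encs (behead l).
Proof.
move=> Hx; rewrite /Tl /TlF den_Cl den_Div den_Cst // den_Pred den_Div ?den_Pow ?den_Cst ?expn_gt0 //.
rewrite (@den_Hd (V 0) _ l) den_V0 ?Hx //.
case: l {Hx} => [//|a l] /=.
by rewrite mulKn ?expn_gt0 //= -mul2n mulKn.
Qed.
Opaque Tl.

Definition Tls i x := Rc i x (Tl (V 1)).
Lemma drop_behead (l : seq nat) k : drop k.+1 l = behead (drop k l).
Proof. by elim: l k => [|a l IH] [|k] //=; rewrite drop0. Qed.

Lemma den_Tls i x env l : den x env = encs l -> den (Tls i x) env = encs (drop (den i env) l).
Proof.
move=> Hx; rewrite /Tls den_Rc; elim: (den i env) => [|k IH]; first by rewrite drop0.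
by rewrite iterRS (@den_Tl _ _ (drop k l)) ?den_V1 // drop_behead.
Qed.
Opaque Tls.

Definition NthF := Hd (Tls (V 1) (V 0)).
Definition Nth x i := Cl NthF x i Z.
Lemma den_Nth x i env l : den x env = encs l -> den (Nth x i) env = nth 0 l (den i env).
Proof.
move=> Hx; rewrite /Nth /NthF den_Cl (@den_Hd _ _ (drop (den i env) l)).
  by rewrite -nth0 nth_drop addn0.
by rewrite (@den_Tls _ _ _ l) !denV.
Qed.
Opaque Nth.

Definition LenF := Sum (V 0) (Pos (Tls (V 0) (V 1))).
Definition Len x := Cl LenF x Z Z.
Lemma den_Len x env l : den x env = encs l -> den (Len x) env = size l.
Proof.
move=> Hx; rewrite /Len /LenF den_Cl den_Sum den_V0 Hx.
under eq_bigr => i _ do rewrite den_Pos (@den_Tls _ _ _ l) ?denV // encs_eq0 -size_eq0 size_drop subn_eq0 -ltnNge.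
rewrite sum_lt; apply/minn_idPr; exact: size_le_encs.
Qed.
Opaque Len.

Definition ConsF := Mul (Pow (Cst 2) (V 0)) (Sc (Mul (Cst 2) (V 1))).
Definition Cons a c := Cl ConsF a c Z.
Lemma den_Cons a c env : den (Cons a c) env = 2 ^ den a env * (den c env).*2.+1.
Proof. by rewrite /Cons /ConsF den_Cl den_Mul den_Pow den_Cst den_Sc den_Mul den_Cst !denV mul2n. Qed.
Opaque Cons.

Lemma subSpred a m : a - m.+1 = a.-1 - m. Proof. lia. Qed.
Lemma aux1 m N : m < N -> N.-1 - m < N. Proof. lia. Qed.
Lemma aux2 m N : m < N -> (N.-1 - m).+1 = N - m. Proof. lia. Qed.
Definition Build n g :=
  Rc n Z (Let_ (Sub (Pred (sh 0 2 n)) (V 0)) (Cons (sh 1 2 g) (V 2))).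
Lemma den_Build n g env :
  den (Build n g) env = encs (mkseq (fun p => den g (p :: env)) (den n env)).
Proof.
rewrite /Build den_Rc den_Z.
suff H : forall m, m <= den n env -> iterR 0 (fun k a => den (Let_ (Sub (Pred (sh 0 2 n)) (V 0))
     (Cons (sh 1 2 g) (V 2))) [:: k, a & env]) m =
     encs (drop (den n env - m) (mkseq (fun p => den g (p :: env)) (den n env))).
  by rewrite H // subnn drop0.
elim=> [|m IH] Hm.
  by rewrite iterR0 subn0 drop_oversize // size_mkseq.
rewrite iterRS den_Let den_Cons den_Sub den_Pred den_sh0_2 den_sh1_2 !denV IH ?(ltnW Hm) //.
rewrite subSpred [in RHS](drop_nth 0) ?size_mkseq; last by move: Hm; apply: aux1.
rewrite nth_mkseq; last by move: Hm; apply: aux1.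
by rewrite aux2.
Qed.
Opaque Build.
Opaque Build.

Definition inv_c (a : nat) := if odd a then a.-1 else a.+1.
Definition InvF := Ite (Mod (V 0) (Cst 2)) (Pred (V 0)) (Sc (V 0)).
Definition Inv a := Cl InvF a Z Z.
Lemma den_Inv a env : den (Inv a) env = inv_c (den a env).
Proof.
rewrite /Inv /InvF den_Cl den_Ite den_Mod den_Cst // modn2 den_Pred den_Sc !denV /inv_c.
by case: odd.
Qed.
Opaque Inv.

Definition BitF := Mod (Div (V 0) (Pow (Cst 2) (V 1))) (Cst 2).
Definition Bit t z := Cl BitF t z Z.
Lemma den_Bit t z env : den (Bit t z) env = den t env %/ 2 ^ den z env %% 2.
Proof. by rewrite /Bit /BitF den_Cl den_Mod den_Cst // den_Div den_Pow den_Cst ?expn_gt0 // !denV. Qed.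
Opaque Bit.

Lemma encs_inj : injective encs.
Proof.
elim=> [|a l IH] [|b l'] H //.
- by move/eqP: H; rewrite eq_sym encs_eq0.
- by move/eqP: H; rewrite encs_eq0.
have Ha := @den_Hd (V 0) [:: encs (a :: l)] (a :: l) erefl.
have Hb := @den_Hd (V 0) [:: encs (b :: l')] (b :: l') erefl.
have Ta := @den_Tl (V 0) [:: encs (a :: l)] (a :: l) erefl.
have Tb := @den_Tl (V 0) [:: encs (b :: l')] (b :: l') erefl.
rewrite H in Ha Ta; rewrite Ha in Hb; rewrite Ta in Tb.
by rewrite /= in Hb Tb; rewrite Hb (IH _ Tb).
Qed.

Lemma encs_surj x : exists l, x = encs l.
Proof.
elim/ltn_ind: x => x IH.
case: x IH => [|x] IH; first by exists [::].
have Hx := odd_double_half x.+1.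
have Hlt : (x.+1)./2 < x.+1 by rewrite -divn2 ltn_divLR //; lia.
have [l Hl] := IH _ Hlt.
case Ho: (odd x.+1) Hx => Hx.
  exists (0 :: l); rewrite /= expn0 mul1n -Hl; lia.
case: l Hl => [|a l] Hl.
  by move: Hx; rewrite Hl /=.
exists (a.+1 :: l); rewrite -Hx Hl /= expnS add0n -mul2n mulnA.
by [].
Qed.

Lemma encs_bound l B : all (fun a => a < B) l -> encs l < 2 ^ (B * size l).
Proof.
elim: l => [|a l IH] /=; first by rewrite muln0.
case/andP=> Ha /IH Hl.
have H1 : 2 ^ a.+1 <= 2 ^ B by rewrite leq_pexp2l.
have H2 : (encs l).*2.+1 < 2 * 2 ^ (B * size l) by rewrite -mul2n; lia.
rewrite [B * _]mulnS expnD.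
have H3 : 2 ^ a * (encs l).*2.+1 < 2 ^ a * (2 * 2 ^ (B * size l)).
  by rewrite ltn_pmul2l ?expn_gt0.
apply: (leq_trans H3); rewrite mulnA -expnSr.
by rewrite leq_mul2r H1 orbT.
Qed.

Lemma sum_pow2_lt (b : nat -> bool) z : \sum_(0 <= y < z) b y * 2 ^ y < 2 ^ z.
Proof.
elim: z => [|z IH]; first by rewrite big_geq.
rewrite big_nat_recr //= expnS.
have : b z * 2 ^ z <= 2 ^ z by case: (b z); rewrite ?mul1n ?mul0n.
lia.
Qed.

Lemma bit_sum (b : nat -> bool) M z : z < M ->
  (\sum_(0 <= y < M) b y * 2 ^ y) %/ 2 ^ z %% 2 = b z.
Proof.
move=> Hz.
rewrite (@big_cat_nat _ _ _ z.+1) //= big_nat_recr //=.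
have [q Hq] : exists q, \sum_(z.+1 <= i < M) b i * 2 ^ i = q * 2 ^ z.+1.
  exists ((\sum_(z.+1 <= i < M) b i * 2 ^ i) %/ 2 ^ z.+1); apply/esym/eqP; rewrite -dvdn_eq.
  rewrite big_seq; apply: dvdn_sum => i; rewrite mem_index_iota => /andP[Hi _]; apply: dvdn_mull; by rewrite dvdn_Pexp2l.
rewrite Hq expnS.
have -> : \sum_(0 <= i < z) b i * 2 ^ i + b z * 2 ^ z + q * (2 * 2 ^ z) =
  (b z + q * 2) * 2 ^ z + \sum_(0 <= i < z) b i * 2 ^ i by lia.
rewrite divnMDl ?expn_gt0 // divn_small ?sum_pow2_lt // addn0.
by rewrite addnC modnMDl; case: (b z).
Qed.

Section Letters.
Variable S : finType.

Lemma enc_wordE (w : word S) : enc_word w = encs (map (@enc_letter S) w).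
Proof. by elim: w => //= x w ->. Qed.

Lemma enc_letter_lt (x : letter S) : enc_letter x < 2 * #|S|.
Proof.
case: x => s b; rewrite /enc_letter /=.
have H2 : 2 * (enum_rank s).+1 <= 2 * #|S| by apply: leq_mul (leqnn 2) (ltn_ord _).
apply: leq_trans H2; case: b => /=; lia.
Qed.

Lemma enc_letter_inj : injective (@enc_letter S).
Proof.
move=> [s b] [s' b'] /=; rewrite /enc_letter /= => H.
have Hb : b = b'.
  by move: (congr1 odd H); rewrite !oddD !odd_double !oddb /= => ->.
subst b'; have := addIn H.
by move=> /double_inj/ord_inj/enum_rank_inj ->.
Qed.

Lemma enc_letter_surj a : a < 2 * #|S| -> exists x : letter S, enc_letter x = a.
Proof.
move=> Ha; have Hr : a./2 < #|S| by rewrite -divn2 ltn_divLR //; lia.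
exists (enum_val (Ordinal Hr), odd a); rewrite /enc_letter /= enum_valK /=.
by rewrite addnC odd_double_half.
Qed.

Lemma valid_word (l : seq nat) : all (fun a => a < 2 * #|S|) l ->
  exists w : word S, l = map (@enc_letter S) w.
Proof.
elim: l => [|a l IH] /=; first by exists [::].
case/andP=> /enc_letter_surj [x Hx] /IH [w Hw]; exists (x :: w).
by rewrite /= Hx Hw.
Qed.

Lemma all_enc_lt (w : word S) : all (fun a => a < 2 * #|S|) (map (@enc_letter S) w).
Proof. by rewrite all_map; apply/allP => x _ /=; exact: enc_letter_lt. Qed.

Lemma enc_inv (x : letter S) : enc_letter (inv_letter x) = inv_c (enc_letter x).
Proof.
case: x => s b; rewrite /enc_letter /inv_c /= oddD odd_double.
by case: b => /=; rewrite ?addn0 ?addn1.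
Qed.

Lemma map_enc_inv (s : word S) :
  map (@enc_letter S) (inv_word s) = rev (map inv_c (map (@enc_letter S) s)).
Proof.
rewrite /inv_word map_rev -!map_comp; congr rev; apply: eq_map => x /=.
exact: enc_inv.
Qed.

Lemma enc_word_inj : injective (@enc_word S).
Proof.
move=> w w'; rewrite !enc_wordE => /encs_inj.
elim: w w' => [|x w IH] [|x' w'] //= [] /enc_letter_inj -> /IH -> //.
Qed.
End Letters.

Definition Mem e (zs : seq nat) : ex := locked (foldr (fun z acc => Or (Eq e (Cst z)) acc) Z zs).
Lemma den_Mem e zs env : den (Mem e zs) env = (den e env \in zs).
Proof.
rewrite /Mem -lock; elim: zs => [|z zs IH]; first by [].
have -> : foldr (fun z acc => Or (Eq e (Cst z)) acc) Z (z :: zs) =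
  Or (Eq e (Cst z)) (foldr (fun z acc => Or (Eq e (Cst z)) acc) Z zs) by [].
by rewrite den_Or den_Eq den_Cst IH !nb_neq0 in_cons.
Qed.

Definition G1 := locked (Ite (Lt (V 0) (Sub (Sc (V 3)) (V 4))) (Nth (V 7) (Add (Pred (V 4)) (V 0)))
  (Inv (Nth (V 2) (Sub (Pred (V 1)) (Sub (V 0) (Sub (Sc (V 3)) (V 4))))))).
Definition G2 := locked (Ite (Lt (V 0) (Pred (V 4))) (Nth (V 7) (V 0))
  (Ite (Lt (V 0) (Add (Pred (V 4)) (V 1))) (Nth (V 2) (Sub (V 0) (Pred (V 4))))
     (Nth (V 7) (Add (Sub (V 0) (Add (Pred (V 4)) (V 1))) (V 3))))).
Definition LoopC := locked (Build (Add (Sub (Sc (V 2)) (V 3)) (V 0)) G1).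
Definition RepC := locked (Build (Add (Add (Pred (V 3)) (V 0)) (Sub (V 4) (V 2))) G2).
Definition Valid L := locked (All (V 0) (Lt (Nth (V 2) (V 0)) (Cst L))).
Definition Cond := locked (Or (And (Not (And (Eq (V 3) (Cst 1)) (Eq (V 2) (V 4)))) (Eq (V 1) Z))
  (And (Lt (V 3) (V 2)) (And (Le (Add (V 0) (V 3)) (V 2)) (Le (Add (Add (V 0) (V 2)) (Cst 2)) (Add (V 4) (V 3)))))).
Definition Body L := locked (And (Le (Cst 1) (V 3)) (And (Le (V 3) (V 2)) (And (Valid L)
  (And Cond (And (Bit (V 5) LoopC) (Bit (V 5) RepC)))))).
Definition StepF L := locked (Let_ (Len (V 1)) (Ex (Sc (V 0)) (Ex (Sc (V 1)) (Ex (V 5) (Let_ (Len (V 0)) (Body L)))))).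

Definition bitn T z := T %/ 2 ^ z %% 2.
Lemma nb_eq0 (b : bool) : (nat_of_bool b == 0) = ~~ b.
Proof. by case: b. Qed.

Definition g1 (l l' : seq nat) i j p :=
  if p < j.+1 - i then nth 0 l (i.-1 + p)
  else inv_c (nth 0 l' ((size l').-1 - (p - (j.+1 - i)))).
Definition g2 (l l' : seq nat) i j p :=
  if p < i.-1 then nth 0 l p
  else if p < i.-1 + size l' then nth 0 l' (p - i.-1)
  else nth 0 l (p - (i.-1 + size l') + j).

Section Sem.
Variables (l l' : seq nat) (i j T : nat) (rest : seq nat).
Let env := [:: size l', encs l', j, i, size l, T, encs l & rest].

Lemma den_G1 p : den G1 (p :: env) = g1 l l' i j p.
Proof.
rewrite /G1 -lock den_Ite den_Lt den_Sub den_Sc !denV nb_neq0 /g1.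
case: ifP => _.
  by rewrite (@den_Nth _ _ _ l) ?denV // den_Add den_Pred !denV.
by rewrite den_Inv (@den_Nth _ _ _ l') ?denV // den_Sub den_Pred !den_Sub den_Sc !denV.
Qed.

Lemma den_G2 p : den G2 (p :: env) = g2 l l' i j p.
Proof.
rewrite /G2 -lock !den_Ite !den_Lt den_Pred den_Add den_Pred !denV !nb_neq0 /g2.
case: ifP => _; first by rewrite (@den_Nth _ _ _ l) ?denV.
case: ifP => _; first by rewrite (@den_Nth _ _ _ l') ?denV // den_Sub den_Pred !denV.
by rewrite (@den_Nth _ _ _ l) ?denV // den_Add den_Sub den_Add den_Pred !denV.
Qed.

Lemma den_LoopC : den LoopC env = encs (mkseq (g1 l l' i j) (j.+1 - i + size l')).
Proof.
rewrite /LoopC -lock den_Build den_Add den_Sub den_Sc !denV.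
by congr encs; apply: eq_mkseq => p; rewrite den_G1.
Qed.

Lemma den_RepC : den RepC env = encs (mkseq (g2 l l' i j) (i.-1 + size l' + (size l - j))).
Proof.
rewrite /RepC -lock den_Build !den_Add den_Sub den_Pred !denV.
by congr encs; apply: eq_mkseq => p; rewrite den_G2.
Qed.

Lemma all_iota_nth L :
  all (fun p => nth 0 l' p < L) (iota 0 (size l')) = all (fun a => a < L) l'.
Proof.
apply/allP/(all_nthP 0) => H p Hp.
  by apply: H; rewrite mem_iota.
by apply: H; rewrite mem_iota in Hp.
Qed.

Lemma den_Valid L : den (Valid L) env = all (fun a => a < L) l'.
Proof.
rewrite /Valid -lock den_All den_V0 -all_iota_nth; congr nat_of_bool.
apply: eq_all => p; rewrite den_Lt den_Cst (@den_Nth _ _ _ l') ?denV //.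
by rewrite nb_neq0.
Qed.

Definition condb := (~~ ((i == 1) && (j == size l)) && (encs l' == 0)) ||
  [&& i < j, size l' + i <= j & size l' + j + 2 <= size l + i].

Lemma den_Cond : den Cond env = condb.
Proof.
rewrite /Cond -lock den_Or !den_And den_Not den_And !den_Eq !den_Lt !den_Le !den_Add !den_Cst den_Z /env !denV.
by rewrite !nb_neq0 nb_eq0.
Qed.

Lemma den_Body L : (den (Body L) env != 0) =
  [&& 1 <= i, i <= j, all (fun a => a < L) l', condb,
      bitn T (encs (mkseq (g1 l l' i j) (j.+1 - i + size l'))) != 0 &
      bitn T (encs (mkseq (g2 l l' i j) (i.-1 + size l' + (size l - j)))) != 0].
Proof.
rewrite /Body -lock !den_And !nb_neq0 !den_Le den_Cst !denV den_Valid den_Cond !den_Bit !denV.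
by rewrite den_LoopC den_RepC !nb_neq0.
Qed.
End Sem.

Lemma den_StepF L T l M : (den (StepF L) [:: T; encs l; M] != 0) =
  has (fun i => has (fun j => has (fun y' => den (Body L)
     [:: den (Len (V 0)) [:: y', j, i, size l, T, encs l & [:: M]], y', j, i, size l, T, encs l & [:: M]] != 0)
   (iota 0 M)) (iota 0 (size l).+1)) (iota 0 (size l).+1).
Proof.
rewrite /StepF -lock den_Let (@den_Len _ _ l) ?denV // den_Ex den_Sc den_V0 nb_neq0.
apply: eq_has => i; rewrite den_Ex den_Sc den_V1 nb_neq0.
apply: eq_has => j; rewrite den_Ex !denV nb_neq0.
by apply: eq_has => y'; rewrite den_Let.
Qed.

Lemma loop_list (l l' : seq nat) i j : 1 <= i -> i <= j -> j <= size l ->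
  mkseq (g1 l l' i j) (j.+1 - i + size l') = subword l i j ++ rev (map inv_c l').
Proof.
move=> h1 h2 h3.
have Hs : size (subword l i j) = j.+1 - i by rewrite /subword size_take_min size_drop; lia.
apply: (@eq_from_nth _ 0); first by rewrite size_mkseq size_cat Hs size_rev size_map.
move=> p; rewrite size_mkseq => Hp; rewrite nth_mkseq // nth_cat Hs /g1.
case: ifP => Hp1.
  by rewrite /subword nth_take // nth_drop.
rewrite nth_rev ?size_map; last by lia.
rewrite (nth_map 0); last by lia.
congr (inv_c (nth 0 l' _)); lia.
Qed.

Lemma rep_list (l l' : seq nat) i j : 1 <= i -> i <= j -> j <= size l ->
  mkseq (g2 l l' i j) (i.-1 + size l' + (size l - j)) = take i.-1 l ++ l' ++ drop j l.
Proof.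
move=> h1 h2 h3.
have Hs : size (take i.-1 l) = i.-1 by rewrite size_take_min; lia.
apply: (@eq_from_nth _ 0); first by rewrite size_mkseq !size_cat Hs size_drop; lia.
move=> p; rewrite size_mkseq => Hp; rewrite nth_mkseq // nth_cat Hs /g2.
case: ifP => Hp1; first by rewrite nth_take.
have E : (p < i.-1 + size l') = (p - i.-1 < size l') by lia.
rewrite nth_cat E; case: ifP => // Hp2.
rewrite nth_drop; congr nth; lia.
Qed.

Section Main.
Variable S : finType.
Variable R : seq (word S).

Lemma map_loopw (v s : word S) i j :
  map (@enc_letter S) (loopw v i j s) =
  subword (map (@enc_letter S) v) i j ++ rev (map inv_c (map (@enc_letter S) s)).
Proof. by rewrite /loopw /subword map_cat map_take map_drop map_enc_inv. Qed.

Lemma map_repw (v s : word S) i j :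
  map (@enc_letter S) (repw v i j s) =
  take i.-1 (map (@enc_letter S) v) ++ map (@enc_letter S) s ++ drop j (map (@enc_letter S) v).
Proof. by rewrite /repw !map_cat map_take map_drop. Qed.


Lemma condb_gsplit (v s : word S) i j : 1 <= i -> i <= j -> j <= size v ->
  condb (map (@enc_letter S) v) (map (@enc_letter S) s) i j = gsplit v i j s.
Proof.
move=> h1 h2 h3; rewrite /condb /gsplit h1 h2 h3 !size_map encs_eq0 negb_and /=.
congr (_ && _ || _); by case: s.
Qed.

Lemma bitn_lt2 T z : bitn T z < 2.
Proof. by rewrite /bitn ltn_pmod. Qed.

Lemma bitn1 T z : (bitn T z != 0) = (bitn T z == 1).
Proof. by have := bitn_lt2 T z; case: (bitn T z) => [|[]]. Qed.

Variable k : nat.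
Hypothesis Hk : k_chordal R k.
Let L := 2 * #|S|.
Let K := maxn k 3.

Section Fixed.
Variable n M : nat.
Hypothesis HM : M = 2 ^ (L * n).

Lemma enc_lt_M (v : word S) : size v <= n -> enc_word v < M.
Proof.
move=> Hv; rewrite HM enc_wordE; apply: leq_trans (encs_bound (all_enc_lt v)) _.
by rewrite size_map leq_pexp2l // leq_mul2l Hv orbT.
Qed.

Definition good T t := forall v : word S, size v <= n -> size v < K + t ->
  (bitn T (enc_word v) = 1 <-> in_ncl R v).

Lemma step_correct T t v : good T t -> K <= size v -> size v <= n -> size v < K + t.+1 ->
  ((den (StepF L) [:: T; enc_word v; M] != 0) <-> in_ncl R v).
Proof.
move=> HT HK Hn Ht.
have Hsh : forall u : word S, size u < size v -> bitn T (enc_word u) = 1 <-> in_ncl R u.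
  move=> u Hu; apply: HT; lia.
rewrite enc_wordE den_StepF; split.
  case/hasP=> i; rewrite mem_iota add0n => Hi.
  case/hasP=> j; rewrite mem_iota add0n => Hj.
  case/hasP=> y' _.
  have [l' ->] := encs_surj y'.
  rewrite (@den_Len _ _ l') ?den_V0 // den_Body.
  case/and5P=> h1 h2 Hval Hc /andP[Hb1 Hb2].
  rewrite size_map in Hi Hj.
  have [s' Es'] := valid_word Hval; subst l'.
  have h3 : j <= size v by lia.
  rewrite condb_gsplit // in Hc.
  rewrite loop_list ?size_map // -map_loopw -enc_wordE bitn1 in Hb1.
  rewrite rep_list ?size_map // -map_repw -enc_wordE bitn1 in Hb2.
  have [lt1 lt2] := gsplit_lt Hc.
  apply: (gsplit_sound Hc); [apply/(Hsh _ lt1)|apply/(Hsh _ lt2)]; exact/eqP.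
move=> Hv.
have [i [j [s' [Hg Hl Hr]]]] := decomp Hk Hv HK.
have [lt1 lt2] := gsplit_lt Hg.
have Hg' := Hg; case/and4P: Hg' => h1 h2 h3 h4.
apply/hasP; exists i; first by rewrite mem_iota size_map; lia.
apply/hasP; exists j; first by rewrite mem_iota size_map; lia.
apply/hasP; exists (enc_word s').
  rewrite mem_iota add0n; apply: enc_lt_M.
  case/orP: h4 => [/andP[_ /eqP->] //|/and3P[_ a _]]; lia.
rewrite enc_wordE (@den_Len _ _ (map (@enc_letter S) s')) ?den_V0 // den_Body h1 h2 /=.
rewrite all_enc_lt /=.
rewrite condb_gsplit // Hg /=.
have h3' : j <= size (map (@enc_letter S) v) by rewrite size_map.
rewrite (loop_list _ h1 h2 h3') (rep_list _ h1 h2 h3') -map_loopw -map_repw -!enc_wordE !bitn1.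
by apply/andP; split; apply/eqP; [apply/(Hsh _ lt1)|apply/(Hsh _ lt2)].
Qed.

End Fixed.
End Main.

Definition Base zs y := locked (Cl (Mem (V 0) zs) y Z Z).
Lemma den_Base zs y env : den (Base zs y) env = (den y env \in zs).
Proof. by rewrite /Base -lock den_Cl den_Mem den_V0. Qed.

Definition DB L K zs := locked (Ite (Lt (Len (V 0)) (Cst K)) (Base zs (V 0)) (Cl (StepF L) (V 2) (V 0) (V 3))).

Lemma den_DB_bool L K zs e : den (DB L K zs) e = nat_of_bool (den (DB L K zs) e != 0).
Proof.
rewrite /DB -lock den_Ite; case: ifP => _; first by rewrite den_Base; case: (_ \in _).
by rewrite den_Cl /StepF -lock den_Let den_Ex; case: has.
Qed.

Lemma den_DB L K zs (S : finType) (v : word S) t T M rest :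
  den (DB L K zs) [:: enc_word v, t, T, M & rest] =
  if size v < K then nat_of_bool (enc_word v \in zs) else den (StepF L) [:: T; enc_word v; M].
Proof.
rewrite /DB -lock den_Ite den_Lt (@den_Len _ _ (map (@enc_letter S) v)) ?den_V0 ?enc_wordE //.
rewrite size_map den_Cst nb_neq0; case: ifP => _; first by rewrite den_Base den_V0.
by rewrite den_Cl !denV.
Qed.

Definition Tab0 zs := locked (Sum (V 0) (Mul (Base zs (V 0)) (Pow (Cst 2) (V 0)))).
Lemma den_Tab0 zs M rest :
  den (Tab0 zs) (M :: rest) = \sum_(0 <= y < M) (y \in zs) * 2 ^ y.
Proof.
rewrite /Tab0 -lock den_Sum den_V0; apply: eq_bigr => y _.
by rewrite den_Mul den_Base den_Pow den_Cst !den_V0.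
Qed.

Definition TabS L K zs := locked (Sum (V 2) (Mul (DB L K zs) (Pow (Cst 2) (V 0)))).
Lemma den_TabS L K zs t T M rest :
  den (TabS L K zs) [:: t, T, M & rest] =
  \sum_(0 <= y < M) (den (DB L K zs) [:: y, t, T, M & rest] != 0) * 2 ^ y.
Proof.
rewrite /TabS -lock den_Sum den_V2; apply: eq_bigr => y _.
by rewrite den_Mul den_Pow den_Cst den_V0 -den_DB_bool.
Qed.

Definition Top L K zs := locked (Let_ (Len (V 0)) (Let_ (Pow (Cst 2) (Mul (Cst L) (V 0)))
  (Bit (Rc (V 1) (Tab0 zs) (TabS L K zs)) (V 2)))).

Lemma den_Top L K zs (S : finType) (w : word S) :
  den (Top L K zs) [:: enc_word w] =
  bitn (iterR (den (Tab0 zs) [:: 2 ^ (L * size w); size w; enc_word w])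
    (fun t a => den (TabS L K zs) [:: t, a, 2 ^ (L * size w), size w & [:: enc_word w]]) (size w))
    (enc_word w).
Proof.
rewrite /Top -lock den_Let (@den_Len _ _ (map (@enc_letter S) w)) ?den_V0 ?enc_wordE //.
rewrite den_Let den_Pow den_Mul !den_Cst !denV den_Bit den_Rc !denV size_map.
by rewrite /bitn.
Qed.

Lemma exists_filter (T : eqType) (l : seq T) (P : T -> Prop) :
  exists l' : seq T, forall x, x \in l' <-> (x \in l /\ P x).
Proof.
elim: l => [|a l [l' IH]]; first by exists [::] => x; split => // -[].
case: (classic (P a)) => Pa.
  exists (a :: l') => x; rewrite !in_cons; split.
    case/orP=> [/eqP->|/IH [H1 H2]]; first by rewrite eqxx.
    by rewrite H1 orbT.
  case=> /orP[/eqP->|H1] H2; first by rewrite eqxx.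
  by apply/orP; right; apply/IH.
exists l' => x; rewrite in_cons; split.
  by case/IH=> H1 H2; rewrite H1 orbT.
case=> /orP[/eqP->|H1] H2 //; by apply/IH.
Qed.

Section Final.
Variable S : finType.
Variable R : seq (word S).
Variable k : nat.
Hypothesis Hk : k_chordal R k.
Let L := 2 * #|S|.
Let K := maxn k 3.

Lemma Zs_exists : exists zs : seq nat,
  forall w : word S, size w < K -> (enc_word w \in zs <-> in_ncl R w).
Proof.
have [l' Hl'] := exists_filter (allw S K) (in_ncl R).
exists (map (@enc_word S) l') => w Hw.
rewrite (mem_map (@enc_word_inj S)) Hl'; split; first by case.
by move=> H; split => //; apply: allwP; exact: ltnW.
Qed.

Variable zs : seq nat.
Hypothesis Hzs : forall w : word S, size w < K -> (enc_word w \in zs <-> in_ncl R w).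

Lemma nb1 (b : bool) : (nat_of_bool b = 1) <-> b.
Proof. by case: b. Qed.

Section Inv.
Variable w : word S.
Let n := size w.
Let M := 2 ^ (L * n).
Let x := enc_word w.

Lemma good0 : good R k n (den (Tab0 zs) [:: M; n; x]) 0.
Proof.
move=> v Hn Ht; rewrite den_Tab0 /bitn bit_sum; last exact: enc_lt_M.
rewrite nb1; apply: Hzs; rewrite addn0 in Ht; exact: Ht.
Qed.

Lemma goodS t T : good R k n T t ->
  good R k n (den (TabS L K zs) [:: t, T, M, n & [:: x]]) t.+1.
Proof.
move=> HT v Hn Ht; rewrite den_TabS /bitn bit_sum; last exact: enc_lt_M.
rewrite den_DB; case: ifP => HK.
  by rewrite nb_neq0 nb1; apply: Hzs.
rewrite nb1; apply: (@step_correct S R k Hk n M erefl T t v HT _ Hn Ht).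
by rewrite leqNgt HK.
Qed.

Lemma good_iter t : good R k n (iterR (den (Tab0 zs) [:: M; n; x])
    (fun t a => den (TabS L K zs) [:: t, a, M, n & [:: x]]) t) t.
Proof. elim: t => [|t IH]; [exact: good0 | exact: goodS]. Qed.

Lemma decide_correct :
  bitn (iterR (den (Tab0 zs) [:: M; n; x])
    (fun t a => den (TabS L K zs) [:: t, a, M, n & [:: x]]) n) x = 1 <-> in_ncl R w.
Proof. apply: good_iter => //; rewrite /K; lia. Qed.
End Inv.
End Final.

Theorem theorem15 (S : finType) (R : seq (word S)) :
  (exists k : nat, k_chordal R k) ->
  (exists f : nat -> nat, isoperimetric R f /\ recursive_fun f) /\
  word_problem_solvable R.
Proof.
move=> [k Hk]; split.
  have [C HC] := dehn Hk.
  exists (fun n => C * 2 ^ n); split.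
    split; last exact: HC.
    by move=> m n H; rewrite leq_mul2l leq_pexp2l // orbT.
  exists (comp 1 (Mul (Cst C) (Pow (Cst 2) (V 0)))) => n.
  have := comp_ok1 (Mul (Cst C) (Pow (Cst 2) (V 0))) n.
  by rewrite den_Mul den_Cst den_Pow den_Cst den_V0.
have [zs Hzs] := Zs_exists R k.
exists (comp 1 (Top (2 * #|S|) (maxn k 3) zs)) => w.
have := comp_ok1 (Top (2 * #|S|) (maxn k 3) zs) (enc_word w).
rewrite den_Top => E.
have D := decide_correct Hk Hzs w.
split => H.
  by move/D: H => H; rewrite H in E.
have : bitn (iterR (den (Tab0 zs) [:: 2 ^ (2 * #|S| * size w); size w; enc_word w])
    (fun t a => den (TabS (2 * #|S|) (maxn k 3) zs)
        [:: t, a, 2 ^ (2 * #|S| * size w), size w & [:: enc_word w]]) (size w)) (enc_word w) = 0.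
  have := bitn_lt2 (iterR (den (Tab0 zs) [:: 2 ^ (2 * #|S| * size w); size w; enc_word w])
    (fun t a => den (TabS (2 * #|S|) (maxn k 3) zs)
        [:: t, a, 2 ^ (2 * #|S| * size w), size w & [:: enc_word w]]) (size w)) (enc_word w).
  case: (bitn _ _) D => [|[|//]] D //.
  by move=> _; exfalso; apply: H; apply/D.
by move=> H0; rewrite H0 in E.
Qed.
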